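(* Let $p$ be a prime, $C$ a countable $p$-group, and $A$ a countable abelian group with $p$-primary subgroup $A_p$. Then $\mathrm{PExt}(C,A)$ and $\mathrm{PExt}(C,A_p)$ are Borel-definably isomorphic.
   Context: For countable $C,A$: $\mathsf Z(C,A)$ is the Polish group (closed in $A^{C\times C}$) of normalized symmetric 2-cocycles ($c(x,0)=0$, $c(x,y)=c(y,x)$, $c(y,z)-c(x+y,z)+c(x,y+z)-c(x,y)=0$), $\mathsf B(C,A)$ the subgroup of coboundaries $c(x,y)=\phi(y)-\phi(x+y)+\phi(x)$, $\mathsf B_{\mathrm w}(C,A)$ the subgroup of cocycles whose restriction to $S\times S$ is a coboundary for every finite $S\le C$; $\mathrm{PExt}(C,A)=\mathsf B_{\mathrm w}(C,A)/\mathsf B(C,A)$, a group with a Polish cover. A homomorphism between groups with a Polish cover $\hat G/N\to\hat H/M$ is Borel-definable if it is induced by a Borel function $\hat G\to\hat H$; a Borel-definable isomorphism is a bijective Borel-definable homomorphism. *)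

(* Defs.v *)
From HB Require Import structures.
From mathcomp Require Import all_boot all_order all_algebra.
From mathcomp Require Import all_classical all_reals all_analysis.

Set Implicit Arguments.
Unset Strict Implicit.
Unset Printing Implicit Defensive.

Import Order.TTheory GRing.Theory Num.Theory.
Local Open Scope classical_set_scope.
Local Open Scope ring_scope.

Definition cochain_space (C A : countZmodType) : topologicalType :=
  {ptws (C * C)%type -> discrete_topology A}.

Definition Borel (T : topologicalType) : set (set T) := <<s open >>.

Definition borel_on (T U : topologicalType) (D : set T) (f : T -> U) : Prop :=
  forall B : set U, Borel B ->
    exists2 B' : set T, Borel B' & D `&` (f @^-1` B) = D `&` B'.

Definition pprimary (p : nat) (A : zmodType) : set A :=
  [set a | exists n : nat, a *+ (p ^ n) = 0].

Definition is_pgroup (p : nat) (C : zmodType) : Prop :=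
  forall x : C, exists n : nat, x *+ (p ^ n) = 0.

(* Throughout, G : set A is a subgroup of A used as coefficient group:
   cochains with coefficients in G are the c : C*C -> A with values in G.
   For G = setT this is literally the paper's definition with coefficients in
   A; for G = pprimary p A it is the one with coefficients in A_p. *)

Definition Zcoc (C A : countZmodType) (G : set A) : set (C * C -> A) :=
  [set c | (forall x y, G (c (x, y))) /\
           (forall x, c (x, 0) = 0) /\
           (forall x y, c (x, y) = c (y, x)) /\
           (forall x y z,
              c (y, z) - c (x + y, z) + c (x, y + z) - c (x, y) = 0)].

Definition Bcob (C A : countZmodType) (G : set A) : set (C * C -> A) :=
  [set c | Zcoc G c /\
           exists2 phi : C -> A, (forall x, G (phi x)) &
             forall x y, c (x, y) = phi y - phi (x + y) + phi x].

Definition finite_subgroup (C : zmodType) (S : set C) : Prop :=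
  finite_set S /\ S 0 /\ (forall x y, S x -> S y -> S (x - y)).

Definition Bwcob (C A : countZmodType) (G : set A) : set (C * C -> A) :=
  [set c | Zcoc G c /\
           forall S : set C, finite_subgroup S ->
             exists2 phi : C -> A, (forall x, G (phi x)) &
               forall x y, S x -> S y ->
                 c (x, y) = phi y - phi (x + y) + phi x].

Definition cdiff (C A : countZmodType) (c d : C * C -> A) : C * C -> A :=
  fun xy => c xy - d xy.
Definition cadd (C A : countZmodType) (c d : C * C -> A) : C * C -> A :=
  fun xy => c xy + d xy.

(* PExt(C,G1) = Bw(C,G1)/B(C,G1) and PExt(C,G2) = Bw(C,G2)/B(C,G2) are
   Borel-definably isomorphic: there is a Borel function f on Bw(C,G1) with
   values in Bw(C,G2) inducing a well-defined bijective group homomorphism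
   between the quotients. *)
Definition PExt_borel_isomorphic (C A : countZmodType) (G1 G2 : set A) : Prop :=
  exists f : (C * C -> A) -> (C * C -> A),
    @borel_on (cochain_space C A) (cochain_space C A) (Bwcob G1) f /\
        (forall c, Bwcob G1 c -> Bwcob G2 (f c)) /\
        (forall c d, Bwcob G1 c -> Bwcob G1 d ->
           Bcob G1 (cdiff c d) -> Bcob G2 (cdiff (f c) (f d))) /\
        (forall c d, Bwcob G1 c -> Bwcob G1 d ->
           Bcob G2 (cdiff (f (cadd c d)) (cadd (f c) (f d)))) /\
        (forall c d, Bwcob G1 c -> Bwcob G1 d ->
           Bcob G2 (cdiff (f c) (f d)) -> Bcob G1 (cdiff c d)) /\
        (forall e, Bwcob G2 e -> exists2 c, Bwcob G1 c & Bcob G2 (cdiff e (f c))).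

(* Main.v *)
Require Import Defs.
From HB Require Import structures.
From mathcomp Require Import all_boot all_order all_algebra.
From mathcomp Require Import all_classical all_reals all_analysis.
Import Order.TTheory GRing.Theory Num.Theory.
Local Open Scope classical_set_scope.
Local Open Scope ring_scope.
Set Implicit Arguments.
Unset Strict Implicit.

Section Ident.
Variable V : zmodType.
Implicit Types a b c d e f u : V.
Ltac nrm := apply/eqP; rewrite -subr_eq0 ?opprD ?opprK ?addrA; apply/eqP.
Ltac zc := by rewrite ?subrr ?addNr ?addr0.
Lemma I1 u a b d e : (u - b + e) + (b - d + a) = u + a - d + e.
Proof. by rewrite addrAC -[u - b + (b - d + a)]addrA -[b - d + a]addrA addKr (addrC (-d)) addrA. Qed.
Lemma I2 a b c d e f : (a - b + c) - (a - d + e) + (b - d + f) - (c - e + f) = 0.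
Proof. rewrite !opprD !opprK !addrA.
rewrite (ACl ((1*4)*(2*7)*(3*10)*(5*8)*(6*11)*(9*12))%AC) /=.
by rewrite !subrr !addNr !addr0.
Qed.
Lemma I6 a b c d : (a - b) - (c - d) = (a - c) - (b - d).
Proof. nrm; rewrite (ACl ((1*5)*(2*7)*(3*6)*(4*8))%AC) /=; zc. Qed.
Lemma I7 a b c d : (a + b) - (c + d) = (a - c) + (b - d).
Proof. nrm; rewrite (ACl ((1*5)*(2*7)*(3*6)*(4*8))%AC) /=; zc. Qed.
Lemma I4 a b c a' b' c' : (a - b + c) - (a' - b' + c') = (a - a') - (b - b') + (c - c').
Proof. by rewrite I7 I6. Qed.
Lemma I5 a b c a' b' c' : (a - b + c) + (a' - b' + c') = (a + a') - (b + b') + (c + c').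
Proof. nrm; rewrite (ACl ((1*7)*(2*9)*(3*11)*(4*8)*(5*10)*(6*12))%AC) /=; zc. Qed.
Lemma I3 a b c d a' b' c' d' : (a - a') - (b - b') + (c - c') - (d - d') = (a - b + c - d) - (a' - b' + c' - d').
Proof. nrm; rewrite (ACl ((1*9)*(2*13)*(3*10)*(4*14)*(5*11)*(6*15)*(7*12)*(8*16))%AC) /=; zc. Qed.
Lemma I8 c d x y z : (c + d - x) - ((c - y) + (d - z)) = (y + z) - x.
Proof. nrm; rewrite (ACl ((1*4)*(2*6)*(3*10)*(5*8)*(7*9))%AC) /=; zc. Qed.
Lemma I9 a b c : a - b + c = c - b + a.
Proof. nrm; rewrite (ACl ((1*6)*(2*5)*(3*4))%AC) /=; zc. Qed.
Lemma I10 a b c d a' b' c' d' : (a + a') - (b + b') + (c + c') - (d + d') = (a - b + c - d) + (a' - b' + c' - d').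
Proof. nrm; rewrite (ACl ((1*9)*(2*13)*(3*10)*(4*14)*(5*11)*(6*15)*(7*12)*(8*16))%AC) /=; zc. Qed.
End Ident.

Section Main.
Variables (p : nat) (C A : countZmodType).
Hypothesis hp : (0 < p)%N.
Hypothesis hC : is_pgroup p C.

Local Notation Ap := (@pprimary p A).

Lemma Ap0 : Ap (0 : A). Proof. by exists 0%N; rewrite mul0rn. Qed.
Lemma ApN (a : A) : Ap a -> Ap (- a).
Proof. by case=> n hn; exists n; rewrite mulNrn hn oppr0. Qed.
Lemma ApD (a b : A) : Ap a -> Ap b -> Ap (a + b).
Proof.
case=> n hn [m hm]; exists (n + m)%N.
by rewrite mulrnDl expnD !mulrnA hn mul0rn -mulrnA mulnC mulrnA hm mul0rn addr0.
Qed.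
Lemma ApB (a b : A) : Ap a -> Ap b -> Ap (a - b).
Proof. by move=> ha hb; apply: ApD => //; exact: ApN. Qed.

Definition ordx (x : C) : nat := (p ^ (projT1 (cid (hC x))))%N.
Lemma ordP (x : C) : x *+ ordx x = 0.
Proof. exact: (projT2 (cid (hC x))). Qed.
Lemma ordx_gt0 (x : C) : (0 < ordx x)%N.
Proof. by rewrite /ordx expn_gt0 hp. Qed.
Lemma ApO (a : A) (x : C) : Ap (a *+ ordx x) -> Ap a.
Proof. by case=> m hm; exists (projT1 (cid (hC x)) + m)%N; rewrite expnD mulrnA. Qed.

Definition s (c : C * C -> A) (x : C) : A := \sum_(k < ordx x) c (x, x *+ k).
Definition Psi (x : C) (v : A) : A :=
  if x == 0 then 0 else
  match pselect (exists a : A, Ap (a *+ ordx x - v)) with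
  | left h => projT1 (cid h) | right _ => 0 end.
Definition phi c x := Psi x (s c x).
Definition cob (psi : C -> A) : C * C -> A :=
  fun xy => psi xy.2 - psi (xy.1 + xy.2) + psi xy.1.
Definition F (c : C * C -> A) : C * C -> A := fun xy => c xy - cob (phi c) xy.

Lemma phi0 (c : C * C -> A) : phi c 0 = 0.
Proof. by rewrite /phi /Psi eqxx. Qed.

Lemma PsiP (x : C) (v : A) : (x = 0 -> v = 0) -> (exists a, Ap (a *+ ordx x - v)) ->
  Ap (Psi x v *+ ordx x - v).
Proof.
move=> h0 ex; rewrite /Psi; case: eqP => [x0|_].
  by rewrite h0 // mul0rn subr0; exact: Ap0.
case: pselect => [h|//]; exact: (projT2 (cid h)).
Qed.

Lemma s0 (c : C * C -> A) : c (0,0) = 0 -> s c 0 = 0.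
Proof. by move=> h; rewrite /s big1 // => k _; rewrite mul0rn. Qed.

Lemma tel (c : C * C -> A) (chi : C -> A) (x : C) (N : nat) : (forall k, (k < N)%N -> c (x, x *+ k) = cob chi (x, x *+ k)) ->
  \sum_(k < N) c (x, x *+ k) = chi x *+ N - chi (x *+ N) + chi 0.
Proof.
elim: N => [|N IH] h; first by rewrite big_ord0 !mulr0n sub0r addNr.
rewrite big_ord_recr /= IH; last by move=> k hk; apply: h; exact: leqW.
rewrite h // /cob /= -mulrS [chi x *+ N.+1]mulrSr.
exact: I1.
Qed.

Lemma chi0 (c : C * C -> A) (chi : C -> A) : c (0,0) = 0 -> c (0,0) = cob chi (0,0) -> chi 0 = 0.
Proof. by move=> h; rewrite h /cob /= addr0 subrr add0r => <-. Qed.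

Lemma sP (c : C * C -> A) (chi : C -> A) (x : C) : c (0,0) = 0 ->
  (forall k, (k < ordx x)%N -> c (x, x *+ k) = cob chi (x, x *+ k)) ->
  c (0,0) = cob chi (0,0) -> s c x = chi x *+ ordx x.
Proof.
move=> c00 h h0; rewrite /s (tel h) ordP (chi0 c00 h0) subr0 addr0 //.
Qed.

Section Sub.
Variable S : set C.
Hypothesis hS : finite_subgroup S.
Lemma sub0 : S 0. Proof. by case: hS => _ []. Qed.
Lemma subN (x : C) : S x -> S (- x).
Proof. by case: hS => _ [h0 hB] hx; rewrite -sub0r; apply: hB. Qed.
Lemma subD (x y : C) : S x -> S y -> S (x + y).
Proof. by case: hS => _ [h0 hB] hx hy; rewrite -[y]opprK; apply: hB => //; exact: subN. Qed.
Lemma subMn (x : C) k : S x -> S (x *+ k).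
Proof. by move=> hx; elim: k => [|k IH]; [rewrite mulr0n; exact: sub0|rewrite mulrS; exact: subD]. Qed.
End Sub.

Lemma loc (c : C * C -> A) (psi : C -> A) (S : set C) (z : C) : finite_subgroup S -> c (0,0) = 0 ->
  (forall x y, S x -> S y -> c (x,y) = psi y - psi (x + y) + psi x) -> S z ->
  Ap (psi z - phi c z).
Proof.
move=> hS c00 h hz.
have hs : s c z = psi z *+ ordx z.
  apply: sP => //; last by apply: h; exact: sub0.
  by move=> k hk; apply: h => //; exact: subMn.
have hq : Ap (phi c z *+ ordx z - s c z).
  apply: PsiP; first by move=> ->; exact: s0.
  by exists (psi z); rewrite hs subrr; exact: Ap0.
apply: (@ApO _ z); rewrite mulrnBl -hs -opprB; exact: ApN.
Qed.

Lemma modx (x : C) (i : nat) : x *+ i = x *+ (i %% ordx x).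
Proof. by rewrite {1}(divn_eq i (ordx x)) mulrnDr mulnC mulrnA ordP mul0rn add0r. Qed.

Lemma negx (x : C) (i : nat) : - (x *+ i) = x *+ ((ordx x).-1 * i)%N.
Proof.
have e : x *+ (ordx x).-1 = - x.
  by apply/eqP; rewrite -addr_eq0 -mulrSr prednK ?ordx_gt0 // ordP.
by rewrite mulrnA e mulNrn.
Qed.

Lemma gen2 (x y : C) : exists S, finite_subgroup S /\ S x /\ S y.
Proof.
exists [set z | exists i j, z = x *+ i + y *+ j]; split; last first.
  by split; [exists 1%N, 0%N; rewrite mulr1n mulr0n addr0|exists 0%N, 1%N; rewrite mulr1n mulr0n add0r].
split; last split.
- apply: (@sub_finite_set _ _
    ((fun ij : 'I_(ordx x) * 'I_(ordx y) => x *+ ij.1 + y *+ ij.2) @` setT)); last first.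
    exact: finite_image finite_finset.
  move=> z [i [j ->]].
  exists (Ordinal (ltn_pmod i (ordx_gt0 x)), Ordinal (ltn_pmod j (ordx_gt0 y))) => //=.
  by rewrite -modx -modx.
- by exists 0%N, 0%N; rewrite !mulr0n addr0.
- move=> _ _ [i [j ->]] [i' [j' ->]].
  exists (i + (ordx x).-1 * i')%N, (j + (ordx y).-1 * j')%N.
  by rewrite I7 negx negx -!mulrnDr.
Qed.

End Main.

Section Main2.
Variables (p : nat) (C A : countZmodType).
Hypothesis hp : (0 < p)%N.
Hypothesis hC : is_pgroup p C.
Local Notation Ap := (@pprimary p A).
Local Notation F := (@F p C A hC).
Local Notation phi := (@phi p C A hC).
Local Notation s := (@s p C A hC).
Local Notation ordx := (@ordx p C hC).

Lemma ApSum (f : nat -> A) n : (forall k, Ap (f k)) -> Ap (\sum_(k < n) f k).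
Proof. by move=> h; apply: big_ind => //; [exact: Ap0|exact: ApD]. Qed.

Lemma Znorm (G : set A) (c : C * C -> A) : Zcoc G c -> c (0,0) = 0.
Proof. by case=> _ [h _]. Qed.

Lemma BwE (c : C * C -> A) : Bwcob setT c -> forall z, Ap (s c z - phi c z *+ ordx z).
Proof.
move=> [hZ hB] z.
have c00 := Znorm hZ.
have [S [hS [hz _]]] := gen2 hp hC z z.
have [psi _ hpsi] := hB S hS.
have hs : s c z = psi z *+ ordx z.
  apply: sP => //; last by apply: hpsi; exact: sub0.
  by move=> k hk; apply: hpsi => //; exact: subMn.
rewrite -opprB; apply: ApN; apply: PsiP; first by move=> ->; exact: s0.
by exists (psi z); rewrite hs subrr; exact: Ap0.
Qed.

Lemma cob_cocycle (psi : C -> A) (x y z : C) :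
  cob psi (y,z) - cob psi (x+y,z) + cob psi (x, y+z) - cob psi (x,y) = 0.
Proof. rewrite /cob /= [x + (y + z)]addrA; exact: I2. Qed.

Lemma Fval (c : C * C -> A) : Bwcob setT c -> forall x y, Ap (F c (x,y)).
Proof.
move=> [hZ hB] x y.
have c00 := Znorm hZ.
have [S [hS [hx hy]]] := gen2 hp hC x y.
have [psi _ hpsi] := hB S hS.
rewrite /F hpsi // /cob /= I4.
by apply: ApD; [apply: ApB|]; apply: (loc _ hS) => //; exact: subD.
Qed.

Lemma FZ (c : C * C -> A) : Bwcob setT c -> Zcoc Ap (F c).
Proof.
move=> hc; have [[_ [hn [hsym hcoc]]] _] := hc.
split; first exact: Fval.
split; first by move=> x; rewrite /F /cob /= hn addr0 phi0 subrK subrr.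
split; first by move=> x y; rewrite /F /cob /= hsym (addrC x y); congr (_ - _); exact: I9.
move=> x y z; rewrite /F I3 hcoc cob_cocycle subrr //.
Qed.

Lemma Zdiff (G : set A) (hG : forall a b, G a -> G b -> G (a - b)) (c d : C * C -> A) :
  Zcoc G c -> Zcoc G d -> Zcoc G (cdiff c d).
Proof.
move=> [v1 [n1 [s1 k1]]] [v2 [n2 [s2 k2]]]; rewrite /cdiff.
split; first by move=> x y; apply: hG.
split; first by move=> x; rewrite n1 n2 subrr.
split; first by move=> x y; rewrite s1 s2.
by move=> x y z; rewrite I3 k1 k2 subrr.
Qed.

Lemma Zadd (G : set A) (hG : forall a b, G a -> G b -> G (a + b)) (c d : C * C -> A) :
  Zcoc G c -> Zcoc G d -> Zcoc G (Defs.cadd c d).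
Proof.
move=> [v1 [n1 [s1 k1]]] [v2 [n2 [s2 k2]]]; rewrite /Defs.cadd.
split; first by move=> x y; apply: hG.
split; first by move=> x; rewrite n1 n2 addr0.
split; first by move=> x y; rewrite s1 s2.
by move=> x y z; rewrite I10 k1 k2 addr0.
Qed.

Lemma FBw (c : C * C -> A) : Bwcob setT c -> Bwcob Ap (F c).
Proof.
move=> hc; split; first exact: FZ.
have [hZ hB] := hc.
have c00 := Znorm hZ.
move=> S hS; have [psi _ hpsi] := hB S hS.
have e : forall z, S z -> (if `[< S z >] then psi z - phi c z else 0) = psi z - phi c z.
  by move=> z hz; rewrite asboolT.
exists (fun z => if `[< S z >] then psi z - phi c z else 0).
  move=> z /=; case: asboolP => [hz|_]; last exact: Ap0.
  exact: (loc _ hS).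
move=> x y hx hy; rewrite /F hpsi // /cob /= !e //; last exact: subD.
by rewrite I4.
Qed.

Lemma BwAdd (c d : C * C -> A) : Bwcob setT c -> Bwcob setT d -> Bwcob setT (Defs.cadd c d).
Proof.
move=> [hc Bc] [hd Bd]; split; first by apply: Zadd.
move=> S hS; have [f1 _ h1] := Bc S hS; have [f2 _ h2] := Bd S hS.
exists (fun z => f1 z + f2 z) => // x y hx hy.
by rewrite /Defs.cadd h1 // h2 // I5.
Qed.

Lemma Bw_of_Ap (c : C * C -> A) : Bwcob Ap c -> Bwcob setT c.
Proof.
move=> [[v [n [sy k]]] B]; split; first by [].
by move=> S hS; have [f _ h] := B S hS; exists f.
Qed.

End Main2.

Section Main3.
Variables (p : nat) (C A : countZmodType).
Hypothesis hp : (0 < p)%N.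
Hypothesis hC : is_pgroup p C.
Local Notation Ap := (@pprimary p A).
Local Notation F := (@F p C A hC).
Local Notation phi := (@phi p C A hC).
Local Notation s := (@s p C A hC).
Local Notation ordx := (@ordx p C hC).

Lemma P3 (c d : C * C -> A) : Bwcob setT c -> Bwcob setT d ->
  Bcob setT (cdiff c d) -> Bcob Ap (cdiff (F c) (F d)).
Proof.
move=> hc hd [hZ [chi _ hchi]].
split; first by apply: Zdiff; [exact: ApB|exact: FZ|exact: FZ].
exists (fun z => chi z - (phi c z - phi d z)).
  move=> z /=; apply: (@ApO _ _ _ hC _ z).
  rewrite !mulrnBl.
  have e : chi z *+ ordx z = s c z - s d z.
    rewrite /s -sumrB.
    symmetry; apply: (sP (c := cdiff c d)).
    - exact: (Znorm hZ).
    - by move=> k _; rewrite hchi.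
    - by rewrite hchi.
  rewrite e I6; apply: ApB; [exact: BwE|exact: BwE].
move=> x y; rewrite /cdiff /F I6.
have -> : c (x, y) - d (x, y) = chi y - chi (x + y) + chi x := hchi x y.
by rewrite /cob /= I4 I4.
Qed.

Lemma P4 (c d : C * C -> A) : Bwcob setT c -> Bwcob setT d ->
  Bcob Ap (cdiff (F (Defs.cadd c d)) (Defs.cadd (F c) (F d))).
Proof.
move=> hc hd; have hcd := BwAdd hc hd.
split.
  apply: Zdiff; [exact: ApB|exact: FZ|].
  by apply: Zadd; [exact: ApD|exact: FZ|exact: FZ].
exists (fun z => (phi c z + phi d z) - phi (Defs.cadd c d) z).
  move=> z /=; apply: (@ApO _ _ _ hC _ z).
  rewrite mulrnBl mulrnDl.
  have e : s (Defs.cadd c d) z = s c z + s d z by rewrite /s -big_split.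
  have := I8 (s c z) (s d z) (phi (Defs.cadd c d) z *+ ordx z) (phi c z *+ ordx z) (phi d z *+ ordx z).
  rewrite -e => <-.
  by apply: ApB; [exact: BwE|apply: ApD; exact: BwE].
move=> x y; rewrite /cdiff /Defs.cadd /F I8 /cob /= I5 I4 //.
Qed.

Lemma P5 (c d : C * C -> A) : Bwcob setT c -> Bwcob setT d ->
  Bcob Ap (cdiff (F c) (F d)) -> Bcob setT (cdiff c d).
Proof.
move=> hc hd [hZ [chi _ hchi]].
split; first by apply: Zdiff => //; [case: hc|case: hd].
exists (fun z => chi z + (phi c z - phi d z)) => // x y.
have h := hchi x y; rewrite /cdiff /F I6 in h.
rewrite /cdiff -[c (x, y) - d (x, y)](subrK (cob (phi c) (x, y) - cob (phi d) (x, y))) h.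
by rewrite /cob /= I4 I5.
Qed.

Lemma P6 (e : C * C -> A) : Bwcob Ap e -> exists2 c, Bwcob setT c & Bcob Ap (cdiff e (F c)).
Proof.
move=> he; have he' := Bw_of_Ap he.
exists e => //; split.
  by apply: Zdiff; [exact: ApB|case: he|exact: FZ].
exists (phi e).
  move=> z; apply: (@ApO _ _ _ hC _ z).
  rewrite -[phi e z *+ ordx z](subKr (s e z)).
  apply: ApB; last exact: BwE.
  rewrite /s; apply: big_ind => //; [exact: Ap0|exact: ApD|].
  by move=> k _; case: he => -[hv _] _; exact: hv.
by move=> x y; rewrite /cdiff /F subKr.
Qed.

End Main3.

Lemma borel_pre (T U : topologicalType) (f : T -> U) : continuous f ->
  forall B, Borel B -> Borel (f @^-1` B).
Proof.
move=> cf B; apply: (@smallest_sub _ _ _ [set B | Borel (f @^-1` B)]).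
- have [S0 SD SU] := @smallest_sigma_algebra T setT open.
  split.
  + by rewrite /= preimage_set0.
  + by move=> A /= HA; rewrite !setTD preimage_setC; have := SD _ HA; rewrite setTD.
  + by move=> F /= HF; rewrite preimage_bigcup; apply: SU.
- move=> O oO /=; apply: sub_sigma_algebra; apply: open_comp => // x _; exact: cf.
Qed.

Lemma nbhs_coord (C A : countZmodType) (c0 : cochain_space C A) (u : (C * C)%type) :
  nbhs c0 [set c : cochain_space C A | c u = c0 u].
Proof.
have h := @proj_continuous _ (fun _ : (C*C)%type => discrete_topology A) u c0.
have h2 := h [set c0 u] (@discrete_set1 (discrete_topology A) (c0 u)).
exact: h2.
Qed.

Lemma cont_crit (C A : countZmodType) (f : cochain_space C A -> cochain_space C A) :
  (forall (c0 : cochain_space C A) (t : (C*C)%type),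
     nbhs c0 [set c : cochain_space C A | f c t = f c0 t]) -> continuous f.
Proof.
move=> H c0.
pose FF := (fmap_filter f (@nbhs_filter (cochain_space C A) c0)).
have [_ h] := @pointwise_cvgP (discrete_topology (C * C)%type) (discrete_topology A) (f @ c0) (f c0) FF.
have h' : forall t : discrete_topology (C * C)%type, (fun g => g t) @ (f @ c0) --> f c0 t.
  move=> t W /= /nbhs_singleton Wt.
  apply: (filterS _ (H c0 t)).
  by move=> c /= ->.
exact (h h').
Qed.

Lemma nbhs_fin (C A : countZmodType) (c0 : cochain_space C A) (u : nat -> (C * C)%type) N :
  nbhs c0 [set c : cochain_space C A | forall k, (k < N)%N -> c (u k) = c0 (u k)].
Proof.
have FF := @nbhs_filter (cochain_space C A) c0.
elim: N => [|N IH].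
  by apply: (@filterS _ _ FF setT); [move=> c _ k|exact: (@filterT _ _ FF)].
apply: (@filterS _ _ FF _ _ _ (@filterI _ _ FF _ _ IH (nbhs_coord c0 (u N)))).
move=> c [h1 h2] k; rewrite ltnS leq_eqVlt; case/orP => [/eqP -> //|hk]; exact: h1.
Qed.

Lemma Fcont (p : nat) (C A : countZmodType) (hC : is_pgroup p C) :
  continuous (F hC : cochain_space C A -> cochain_space C A).
Proof.
apply: cont_crit => c0 [x y].
have FF := @nbhs_filter (cochain_space C A) c0.
have Q : forall z, nbhs c0 [set c : cochain_space C A | s hC c z = s hC c0 z].
  move=> z; apply: (@filterS _ _ FF _ _ _ (nbhs_fin c0 (fun k => (z, z *+ k)) (ordx hC z))).
  by move=> c h; rewrite /s; apply: eq_bigr => k _; exact: h.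
apply: (@filterS _ _ FF _ _ _ (@filterI _ _ FF _ _ (@filterI _ _ FF _ _ (@filterI _ _ FF _ _ (nbhs_coord c0 (x,y)) (Q x)) (Q y)) (Q (x+y)))).
by move=> c [[[h1 h2] h3] h4]; rewrite /= /F /cob /phi /= h1 h2 h3 h4.
Qed.

Unset Implicit Arguments.
Set Strict Implicit.

Theorem lemma4p5 (p : nat) (C A : countZmodType) :
  prime p -> is_pgroup p C ->
  @PExt_borel_isomorphic C A setT (@pprimary p A).
Proof.
move=> pp hC; have hp := prime_gt0 pp.
exists (F hC); split.
  move=> B hB; exists (F hC @^-1` B) => //.
  exact: (@borel_pre (cochain_space C A) (cochain_space C A) (F hC) (@Fcont p C A hC) B hB).
split; first by move=> c hc; exact: FBw.
split; first by move=> c d hc hd; exact: P3.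
split; first by move=> c d hc hd; exact: P4.
split; first by move=> c d hc hd; exact: P5.
by move=> e he; exact: P6.
Qed.
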